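(* Let $\mathbb V$ be a Schubert representation of $\widehat H_n$ with generic Schubert classes $\{\mathcal Y_w\}_{w\in S_n}$, evaluation map $\operatorname{ev}$ and equivariant parameters $t_1,\dots,t_n$. Let $w\in S_n$ and $f\in\mathcal A_\hbar[x_1,\dots,x_n]$, and suppose that in $\widehat H_n$ $$\overline T_wf=\sum_{u\in S_n}P_{u,w}(x_1,\dots,x_n)\,\overline T_u,\qquad P_{u,w}\in\mathcal A_\hbar[x_1,\dots,x_n].$$ Then for each $u\in S_n$, $f\cdot\mathcal Y_u=\sum_{w\in S_n}P_{u,w}(t_1,\dots,t_n)\,\mathcal Y_w$ in $\mathbb V$.
   Context: $\mathcal A=\mathbb Q[p,q]$, $\mathcal A_\hbar=\mathcal A[\hbar]$. The affine Hecke algebra $\widehat H_n$ over $\mathcal A_\hbar$ is generated by $T_1,\dots,T_{n-1}$ and $x_1,\dots,x_n$ subject to: $(T_i+p)(T_i-q)=0$; $T_iT_j=T_jT_i$ for $|i-j|>1$; $T_iT_{i+1}T_i=T_{i+1}T_iT_{i+1}$; $x_ix_j=x_jx_i$; $T_ix_j=x_jT_i$ for $j\ne i,i+1$; $T_ix_i=x_{i+1}T_i+(\hbar-(p-q)x_i)$; $T_ix_{i+1}=x_iT_i-(\hbar-(p-q)x_i)$. For $w\in S_n$ with reduced word $w=s_{i_1}\cdots s_{i_\ell}$, $T_w=T_{i_1}\cdots T_{i_\ell}$; $\overline T_i=T_i+p-q$ and $\overline T_w=\overline T_{i_1}\cdots\overline T_{i_\ell}$ (well defined). The elements $x^\alpha\overline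 T_w$ form an $\mathcal A_\hbar$-basis of $\widehat H_n$. A Schubert representation: a field $\mathbb F$ with elements $t_1,\dots,t_n\in\mathbb F$ (equivariant parameters), a ring map $\mathcal A_\hbar\to\mathbb F$ (images still written $p,q,\hbar$), and an $\mathbb F$-vector space $\mathbb V$ with an action of $\widehat H_n$ in which $\mathcal A_\hbar$ acts by these scalars, together with a distinguished $\mathcal Y_{w_0}\in\mathbb V$ ($w_0$ the longest element of $S_n$) such that $\mathcal Y_w:=T_{w^{-1}w_0}\cdot\mathcal Y_{w_0}$ ($w\in S_n$) form an $\mathbb F$-basis of $\mathbb V$, and an $\mathbb F$-linear map $\operatorname{ev}\colon\mathbb V\to\mathbb F$ with $\operatorname{ev}(\mathcal Y_w)\ne0\iff w=\mathrm{id}$ and $\operatorname{ev}(x_i\cdot\mathcal Y_w)=t_i\operatorname{ev}(\mathcal Y_w)$ for all $i,w$. $P(t_1,\dots,t_n)$ denotes the image of $P$ in $\mathbb F$ under $x_i\mapsto t_i$. *)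

(* Defs.v *)
From HB Require Import structures.
From mathcomp Require Import all_boot all_order all_algebra all_fingroup.
From mathcomp Require Import all_field.
From mathcomp Require Import mpoly.
Set Implicit Arguments. Unset Strict Implicit. Unset Printing Implicit Defensive.
Import GRing.Theory.
Local Open Scope ring_scope.

Definition Ah : Type := {mpoly rat[3]}.
Definition pA : Ah := 'X_(@inord 2 0).
Definition qA : Ah := 'X_(@inord 2 1).
Definition hA : Ah := 'X_(@inord 2 2).

(* Generators are 0-based: s_i (i.+1 < n) swaps i and i.+1
   (paper's s_{i+1}).  Group law = composition of functions:
   compS a b = a o b  (MathComp's  b * a, since (b*a) x = a (b x)). *)
Definition compS n (a b : 'S_n) : 'S_n := (b * a)%g.

Definition sadj n (i : nat) : 'S_n :=
  match (insub i : option 'I_n), (insub i.+1 : option 'I_n) with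
  | Some a, Some b => tperm a b
  | _, _ => 1%g
  end.

Definition valid_word n (ws : seq nat) : bool := all (fun i => i.+1 < n)%N ws.

Definition word_perm n (ws : seq nat) : 'S_n :=
  foldr (fun i acc => compS (sadj n i) acc) 1%g ws.

Definition reduced_word_of n (ws : seq nat) (w : 'S_n) : Prop :=
  [/\ valid_word n ws, word_perm n ws = w &
      forall ws', valid_word n ws' -> word_perm n ws' = w -> (size ws <= size ws')%N].

Definition w0 n : 'S_n := perm (@rev_ord_inj n).

Definition hecke_rel n (R : ringType) (c : Ah -> R) (T x : nat -> R) : Prop :=
  let p := c pA in let q := c qA in let h := c hA in
  (forall i, (i.+1 < n)%N -> (T i + p) * (T i - q) = 0) /\
      (forall i j, (i.+1 < n)%N -> (j.+1 < n)%N -> (i.+1 < j)%N || (j.+1 < i)%N ->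
                  T i * T j = T j * T i) /\
      (forall i, (i.+2 < n)%N -> T i * T i.+1 * T i = T i.+1 * T i * T i.+1) /\
      (forall i j, (i < n)%N -> (j < n)%N -> x i * x j = x j * x i) /\
      (forall i j, (i.+1 < n)%N -> (j < n)%N -> j != i -> j != i.+1 ->
                  T i * x j = x j * T i) /\
      (forall i, (i.+1 < n)%N -> T i * x i = x i.+1 * T i + (h - (p - q) * x i)) /\
      (forall i, (i.+1 < n)%N -> T i * x i.+1 = x i * T i - (h - (p - q) * x i)).

Definition peval n (R : ringType) (c : Ah -> R) (x : nat -> R)
    (F : {mpoly Ah[n]}) : R :=
  \sum_(m <- msupp F) c F@_m * \prod_(i < n) x i ^+ m i.

Definition Tbar_word (R : ringType) (c : Ah -> R) (T : nat -> R) (ws : seq nat) : R :=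
  \prod_(i <- ws) (T i + (c pA - c qA)).

(* An identity  a = b  between words in the generators holds in \hat H_n
   iff it holds in every A_hbar-algebra R under every assignment of the
   generators satisfying the defining relations (universal property of
   the presented algebra). *)
Definition hecke_identity n (rw : 'S_n -> seq nat) (f : {mpoly Ah[n]})
    (P : 'S_n -> 'S_n -> {mpoly Ah[n]}) (w : 'S_n) : Prop :=
  forall (R : ringType) (c : {rmorphism Ah -> R}) (T x : nat -> R),
    (forall (a : Ah) (r : R), c a * r = r * c a) ->
    hecke_rel n c T x ->
    Tbar_word c T (rw w) * peval c x f =
      \sum_(u : 'S_n) peval c x (P u w) * Tbar_word c T (rw u).

Section Action.
Variables (F : fieldType) (V : vectType F).

Definition hecke_action n (phi : Ah -> F) (T x : nat -> {linear V -> V}) : Prop :=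
  let p := phi pA in let q := phi qA in let h := phi hA in
  (forall i v, (i.+1 < n)%N -> T i (T i v - q *: v) + p *: (T i v - q *: v) = 0) /\
      (forall i j v, (i.+1 < n)%N -> (j.+1 < n)%N -> (i.+1 < j)%N || (j.+1 < i)%N ->
                  T i (T j v) = T j (T i v)) /\
      (forall i v, (i.+2 < n)%N -> T i (T i.+1 (T i v)) = T i.+1 (T i (T i.+1 v))) /\
      (forall i j v, (i < n)%N -> (j < n)%N -> x i (x j v) = x j (x i v)) /\
      (forall i j v, (i.+1 < n)%N -> (j < n)%N -> j != i -> j != i.+1 ->
                  T i (x j v) = x j (T i v)) /\
      (forall i v, (i.+1 < n)%N ->
                  T i (x i v) = x i.+1 (T i v) + (h *: v - (p - q) *: x i v)) /\
      (forall i v, (i.+1 < n)%N ->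
                  T i (x i.+1 v) = x i (T i v) - (h *: v - (p - q) *: x i v)).

Definition apply_word (T : nat -> {linear V -> V}) (ws : seq nat) (v : V) : V :=
  foldr (fun i u => T i u) v ws.

Definition xmon_act n (x : nat -> {linear V -> V}) (m : 'X_{1..n}) (v : V) : V :=
  foldr (fun i u => iter (m i) (x (nat_of_ord i)) u) v (enum 'I_n).

Definition poly_act n (phi : Ah -> F) (x : nat -> {linear V -> V})
    (G : {mpoly Ah[n]}) (v : V) : V :=
  \sum_(m <- msupp G) phi G@_m *: xmon_act x m v.

End Action.

(* Main.v *)
Require Import Defs.
From HB Require Import structures.
From mathcomp Require Import all_boot all_order all_algebra all_fingroup.
From mathcomp Require Import all_field.
From mathcomp Require Import mpoly.
From mathcomp Require Import zify ring.
From Stdlib Require Import Classical.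
Set Implicit Arguments. Unset Strict Implicit. Unset Printing Implicit Defensive.
Import GRing.Theory.

Ltac crush_if := repeat match goal with
 | |- context [?a == ?b] => lazymatch a with
      | context [if _ then _ else _] => fail
      | _ => case: (@eqP _ a b) => ? /=
      end
 end; lia.

Section Comb.
Variable n : nat.
Implicit Types (w a b c : 'S_n) (ws : seq nat).

Lemma sadj_val i (hi : (i.+1 < n)%N) (x : 'I_n) :
  val (sadj n i x) = if val x == i then i.+1 else if val x == i.+1 then i else val x.
Proof.
rewrite /sadj; case: insubP => [a _ va|/negP[]]; last exact: ltnW.
case: insubP => [b _ vb|/negP[]//].
case: tpermP => [->|->|hxa hxb]; rewrite ?va ?vb ?eqxx //=.
- by rewrite ifN // neq_ltn ltnSn orbT.
- case: ifP => [/eqP ha|_]; first by case: hxa; apply: val_inj; rewrite /= ha va.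
  case: ifP => [/eqP hb|//]; by case: hxb; apply: val_inj; rewrite /= hb vb.
Qed.

Lemma sadjK i x : sadj n i (sadj n i x) = x.
Proof.
rewrite /sadj; case: (insub i : option 'I_n) => [a|]; case: (insub i.+1 : option 'I_n) => [b|] //=; by rewrite ?tpermK ?perm1.
Qed.

Lemma compSE a b x : compS a b x = a (b x).
Proof. by rewrite /compS permM. Qed.

Lemma compSA a b c : compS a (compS b c) = compS (compS a b) c.
Proof. by rewrite /compS mulgA. Qed.

Lemma compS1 a : compS 1 a = a.
Proof. by rewrite /compS mulg1. Qed.
Lemma compS1r a : compS a 1 = a.
Proof. by rewrite /compS mul1g. Qed.

Lemma word_perm_cat u v : word_perm n (u ++ v) = compS (word_perm n u) (word_perm n v).
Proof.
elim: u => [|i u IH] /=; first by rewrite compS1.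
by rewrite IH compSA.
Qed.

Lemma word_perm_rcons u i : word_perm n (rcons u i) = compS (word_perm n u) (sadj n i).
Proof. by rewrite -cats1 word_perm_cat /= compS1r. Qed.

Lemma valid_rcons u i : valid_word n (rcons u i) = valid_word n u && (i.+1 < n)%N.
Proof. by rewrite /valid_word -cats1 all_cat /= andbT. Qed.

Definition len w : nat :=
  \sum_(x : 'I_n) \sum_(y : 'I_n) ((x < y) && (w y < w x))%N.

Lemma sum_delta (a0 b0 : 'I_n) (k : nat) :
  (\sum_(x : 'I_n) \sum_(y : 'I_n) (((x == a0) && (y == b0)) * k))%N = k.
Proof.
rewrite (bigD1 a0) //= [X in (_ + X)%N]big1 ?addn0; last first.
  by move=> x /negPf hx; rewrite big1 // => y _; rewrite hx.
rewrite (bigD1 b0) //= [X in (_ + X)%N]big1 ?addn0 ?eqxx ?mul1n //.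
by move=> y /negPf hy; rewrite hy andbF.
Qed.


Definition ordi i (hi : (i.+1 < n)%N) : 'I_n := Ordinal (ltnW hi).
Definition ordj i (hi : (i.+1 < n)%N) : 'I_n := Ordinal hi.

Lemma sadj_i i (hi : (i.+1 < n)%N) : sadj n i (ordi hi) = ordj hi.
Proof. by apply: val_inj; rewrite (sadj_val hi) /= ifT. Qed.
Lemma sadj_j i (hi : (i.+1 < n)%N) : sadj n i (ordj hi) = ordi hi.
Proof. by apply: val_inj; rewrite (sadj_val hi) /= ifN ?ifT // neq_ltn ltnSn orbT. Qed.

Lemma sadj_lt i (hi : (i.+1 < n)%N) (x y : 'I_n) :
  ~~ ((val x == i) && (val y == i.+1)) -> ~~ ((val x == i.+1) && (val y == i)) ->
  (sadj n i x < sadj n i y)%N = (x < y)%N.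
Proof.
move=> h1 h2; change ((val (sadj n i x) < val (sadj n i y)) = (val x < val y))%N.
move: h1 h2; rewrite !(sadj_val hi); move: (val x) (val y) => X Y.
by do ! case: eqP => //= ?; lia.
Qed.

Lemma len_rmul w i (hi : (i.+1 < n)%N) :
  (len (compS w (sadj n i)) + (w (ordj hi) < w (ordi hi)) =
   len w + (w (ordi hi) < w (ordj hi)))%N.
Proof.
set s := sadj n i; set oi := ordi hi; set oj := ordj hi.
have e1 : len (compS w s) =
   (\sum_(x : 'I_n) \sum_(y : 'I_n) ((s x < s y) && (w y < w x)))%N.
  rewrite /len (reindex_inj (@perm_inj _ s)); apply: eq_bigr => x _.
  rewrite (reindex_inj (@perm_inj _ s)); apply: eq_bigr => y _.
  by rewrite !compSE !sadjK.
rewrite e1 -{1}(sum_delta oi oj (w oj < w oi)) -(sum_delta oj oi (w oi < w oj)).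
rewrite /len -!big_split /=; apply: eq_bigr => x _; rewrite -!big_split /=.
apply: eq_bigr => y _.
have vij : (oi == oj) = false by rewrite -val_eqE /= eqn_leq ltnn andbF.
case: (eqVneq x oi) => [->|xi].
  case: (eqVneq y oj) => [->|yj].
    rewrite /s sadj_i sadj_j /= ?vij ?(eq_sym oj oi) ?vij /= ?ltnSn /=.
    have -> : (i.+1 < i)%N = false by lia.
    by case: (w _ < w _)%N.
  rewrite vij /= !mul0n !addn0 sadj_lt //.
    by apply/negP => /andP[_ /eqP hy]; case/eqP: yj; apply: val_inj; rewrite hy.
  by apply/negP => /andP[/eqP /= h _]; lia.
case: (eqVneq x oj) => [->|xj].
  case: (eqVneq y oi) => [->|yi].
    rewrite /s sadj_i sadj_j /= ?vij ?(eq_sym oj oi) ?vij /= ?ltnSn /=.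
    have -> : (i.+1 < i)%N = false by lia.
    by case: (w _ < w _)%N.
  rewrite /= ?(eq_sym oj oi) ?vij /= ?(negPf yi) /= ?andbF /= ?mul0n ?muln0 ?addn0 sadj_lt //.
    by apply/negP => /andP[/eqP /= h _]; lia.
  by apply/negP => /andP[_ /eqP hy]; case/eqP: yi; apply: val_inj; rewrite hy.
rewrite /= ?(negPf xj) /= ?mul0n ?addn0 sadj_lt //.
  by apply/negP => /andP[/eqP hx _]; case/eqP: xi; apply: val_inj.
by apply/negP => /andP[/eqP hx _]; case/eqP: xj; apply: val_inj.
Qed.


Definition Npairs : nat := \sum_(x : 'I_n) \sum_(y : 'I_n) (x < y)%N.

Lemma w0E (x : 'I_n) : nat_of_ord (w0 n x) = (n - x.+1)%N.
Proof. by rewrite /w0 permE. Qed.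

Lemma len_w0 z : (len (compS z (w0 n)) + len z)%N = Npairs.
Proof.
have e1 : len (compS z (w0 n)) =
   (\sum_(x : 'I_n) \sum_(y : 'I_n) ((x < y) && (z x < z y)))%N.
  have ww : forall u : 'I_n, w0 n (w0 n u) = u.
    by move=> u; apply: val_inj => /=; rewrite !w0E; have := ltn_ord u; lia.
  rewrite [RHS]exchange_big /len (reindex_inj (@perm_inj _ (w0 n))) /=.
  apply: eq_bigr => x _.
  rewrite (reindex_inj (@perm_inj _ (w0 n))); apply: eq_bigr => y _.
  rewrite !compSE !ww; congr (_ && _).
  rewrite !w0E; have := ltn_ord x; have := ltn_ord y; lia.
rewrite e1 /len /Npairs -big_split /=; apply: eq_bigr => x _.
rewrite -big_split /=; apply: eq_bigr => y _.
case hxy: (x < y)%N => //=.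
have hne : z x != z y.
  by rewrite (inj_eq perm_inj); apply: contraTneq hxy => ->; rewrite ltnn.
case: (ltngtP (z x) (z y)) => //= h.
by case/eqP: hne; apply: val_inj.
Qed.

Lemma len_inv z : len z^-1 = len z.
Proof.
rewrite /len [LHS](reindex_inj (@perm_inj _ z)) [RHS]exchange_big /=.
apply: eq_bigr => x _.
rewrite [LHS](reindex_inj (@perm_inj _ z)); apply: eq_bigr => y _.
by rewrite !permK andbC.
Qed.


Lemma ordi_val i (hi : (i.+1 < n)%N) : nat_of_ord (ordi hi) = i. Proof. by []. Qed.
Lemma ordj_val i (hi : (i.+1 < n)%N) : nat_of_ord (ordj hi) = i.+1. Proof. by []. Qed.

Lemma perm_inc_id w :
  (forall i (hi : (i.+1 < n)%N), w (ordi hi) < w (ordj hi))%N -> w = 1%g.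
Proof.
move=> hinc.
have lo : forall k (hk : (k < n)%N), (k <= w (Ordinal hk))%N.
  elim=> [//|k IH] hk.
  have := hinc k hk; have := IH (ltnW hk); rewrite /ordi /ordj.
  by move=> h1 h2; apply: leq_ltn_trans h1 h2.
have up : forall d k (hk : (k < n)%N), (k + d = n.-1)%N -> (w (Ordinal hk) <= k)%N.
  elim=> [|d IH] k hk e.
    have := ltn_ord (w (Ordinal hk)); lia.
  have hk1 : (k.+1 < n)%N by lia.
  have := IH k.+1 hk1 ltac:(lia); have := hinc k hk1; rewrite /ordi /ordj.
  have -> : Ordinal (ltnW hk1) = Ordinal hk by apply: val_inj.
  lia.
apply/permP => -[k hk]; apply: val_inj; rewrite perm1 /=.
have := lo k hk; have := up (n.-1 - k)%N k hk ltac:(lia); lia.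
Qed.

Lemma desc_exists w : w != 1%g ->
  exists i (hi : (i.+1 < n)%N), (w (ordj hi) < w (ordi hi))%N.
Proof.
move=> hw; apply: NNPP => hne; case/eqP: hw; apply: perm_inc_id => i hi.
have hneq : w (ordi hi) != w (ordj hi).
  by rewrite (inj_eq perm_inj) -val_eqE /= neq_ltn ltnSn.
case: (ltngtP (w (ordi hi)) (w (ordj hi))) => // h.
  by case: hne; exists i, hi.
by case/eqP: hneq; apply: val_inj.
Qed.

Lemma len1 : len 1 = 0%N.
Proof. by rewrite /len big1 // => x _; rewrite big1 // => y _; rewrite !perm1; case: ltngtP. Qed.

Lemma compS_ss i : compS (sadj n i) (sadj n i) = 1%g.
Proof. by apply/permP => x; rewrite compSE sadjK perm1. Qed.

Lemma len_rmul_up w i (hi : (i.+1 < n)%N) :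
  (w (ordi hi) < w (ordj hi))%N -> len (compS w (sadj n i)) = (len w).+1.
Proof.
move=> h; have := len_rmul w hi; rewrite h.
have -> : (w (ordj hi) < w (ordi hi))%N = false by apply/negbTE; rewrite -leqNgt ltnW.
by rewrite addn0 addn1.
Qed.

Lemma len_rmul_down w i (hi : (i.+1 < n)%N) :
  (w (ordj hi) < w (ordi hi))%N -> (len (compS w (sadj n i))).+1 = len w.
Proof.
move=> h; have := len_rmul w hi; rewrite h.
have -> : (w (ordi hi) < w (ordj hi))%N = false by apply/negbTE; rewrite -leqNgt ltnW.
by rewrite addn0 addn1.
Qed.

Lemma len_rmul_le w i : (i.+1 < n)%N -> (len (compS w (sadj n i)) <= (len w).+1)%N.
Proof.
move=> hi; have := len_rmul w hi.
by case: (_ < _)%N; case: (_ < _)%N => /= h; lia.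
Qed.

Lemma len_word ws : valid_word n ws -> (len (word_perm n ws) <= size ws)%N.
Proof.
elim/last_ind: ws => [|u i IH]; first by rewrite /= len1.
rewrite valid_rcons word_perm_rcons size_rcons => /andP[vu hi].
by apply: leq_trans (len_rmul_le _ hi) _; rewrite ltnS IH.
Qed.

Lemma exists_word w : exists ws, [/\ valid_word n ws, word_perm n ws = w & size ws = len w].
Proof.
move: {2}(len w) (erefl (len w)) => k; elim: k w => [|k IH] w hk.
  case: (eqVneq w 1%g) => [->|hw]; first by exists [::]; rewrite len1.
  have [i [hi h]] := desc_exists hw; have := len_rmul_down h; lia.
case: (eqVneq w 1%g) => [hw|hw]; first by move: hk; rewrite hw len1.
have [i [hi h]] := desc_exists hw.
have := len_rmul_down h; rewrite hk => -[] /IH [u [vu pu su]].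
exists (rcons u i); split.
- by rewrite valid_rcons vu hi.
- by rewrite word_perm_rcons pu -compSA compS_ss compS1r.
- by rewrite size_rcons su -hk; apply: len_rmul_down.
Qed.

Lemma reduced_size ws w : reduced_word_of ws w -> size ws = len w.
Proof.
case=> vw pw hmin; apply/eqP; rewrite eqn_leq; apply/andP; split.
  by have [u [vu pu su]] := exists_word w; rewrite -su; apply: hmin.
by rewrite -pw len_word.
Qed.

Definition fw w (k : nat) : nat := if (insub k : option 'I_n) is Some x then val (w x) else 0%N.
Definition sw (i k : nat) : nat := if k == i then i.+1 else if k == i.+1 then i else k.

Lemma fw_ord w (x : 'I_n) : fw w x = w x.
Proof. by rewrite /fw valK. Qed.

Lemma fw_i w i (hi : (i.+1 < n)%N) : fw w i = w (ordi hi).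
Proof. exact: (fw_ord w (ordi hi)). Qed.
Lemma fw_j w i (hi : (i.+1 < n)%N) : fw w i.+1 = w (ordj hi).
Proof. exact: (fw_ord w (ordj hi)). Qed.

Lemma fw_s w i k : (i.+1 < n)%N -> (k < n)%N ->
  fw (compS w (sadj n i)) k = fw w (sw i k).
Proof.
move=> hi hk; have -> : k = val (Ordinal hk) by [].
by rewrite fw_ord compSE -fw_ord (sadj_val hi).
Qed.

Lemma fw_inj w k l : (k < n)%N -> (l < n)%N -> fw w k = fw w l -> k = l.
Proof.
move=> hk hl; have -> : k = val (Ordinal hk) by [].
have -> : l = val (Ordinal hl) by [].
rewrite !fw_ord => /val_inj /perm_inj -> //.
Qed.

Lemma fw_lt w k : (k < n)%N -> (fw w k < n)%N.
Proof. by move=> hk; have -> : k = val (Ordinal hk) by []; rewrite fw_ord. Qed.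

Lemma fw_si w i (hi : (i.+1 < n)%N) : fw (compS w (sadj n i)) i = fw w i.+1.
Proof. by rewrite (fw_s _ hi (ltnW hi)) /sw eqxx. Qed.
Lemma fw_sj w i (hi : (i.+1 < n)%N) : fw (compS w (sadj n i)) i.+1 = fw w i.
Proof. by rewrite (fw_s _ hi hi) /sw ifN ?eqxx // neq_ltn ltnSn orbT. Qed.
Lemma fw_so w i k (hi : (i.+1 < n)%N) : (k < n)%N -> k != i -> k != i.+1 ->
  fw (compS w (sadj n i)) k = fw w k.
Proof. by move=> hk h1 h2; rewrite (fw_s _ hi hk) /sw (negPf h1) (negPf h2). Qed.

Definition reducedP ws := valid_word n ws && (size ws == len (word_perm n ws)).

Lemma len_up w i : (i.+1 < n)%N -> (fw w i < fw w i.+1)%N ->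
  len (compS w (sadj n i)) = (len w).+1.
Proof. by move=> hi; rewrite (fw_i w hi) (fw_j w hi); apply: len_rmul_up. Qed.

Lemma len_down w i : (i.+1 < n)%N -> (fw w i.+1 < fw w i)%N ->
  (len (compS w (sadj n i))).+1 = len w.
Proof. by move=> hi; rewrite (fw_i w hi) (fw_j w hi); apply: len_rmul_down. Qed.

Lemma reduced_rcons u i : reducedP (rcons u i) ->
  [/\ reducedP u, (i.+1 < n)%N & (fw (word_perm n u) i < fw (word_perm n u) i.+1)%N].
Proof.
rewrite /reducedP valid_rcons word_perm_rcons size_rcons => /andP[/andP[vu hi] /eqP e].
have l1 := len_rmul_le (word_perm n u) hi.
have l2 := len_word vu.
have eu : size u = len (word_perm n u) by lia.
rewrite vu eu eqxx; split => //.
have hne : fw (word_perm n u) i != fw (word_perm n u) i.+1.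
  by apply/eqP => /fw_inj h; have := h (ltnW hi) hi; lia.
case: ltngtP hne => // h _.
have := len_down hi h; lia.
Qed.

Lemma compS_sadj_comm i j : (i.+1 < n)%N -> (j.+1 < n)%N -> ((i.+1 < j) || (j.+1 < i))%N ->
  compS (sadj n i) (sadj n j) = compS (sadj n j) (sadj n i).
Proof.
move=> hi hj hij; apply/permP => x; apply: val_inj; rewrite !compSE.
rewrite !(sadj_val hi) !(sadj_val hj) !(sadj_val hi); move: (val x) => X.
crush_if.
Qed.

Lemma compS_braid i : (i.+2 < n)%N ->
  compS (sadj n i) (compS (sadj n i.+1) (sadj n i)) =
  compS (sadj n i.+1) (compS (sadj n i) (sadj n i.+1)).
Proof.
move=> hi2; have hi : (i.+1 < n)%N by lia.
apply/permP => x; apply: val_inj; rewrite !compSE.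
rewrite !(sadj_val hi) !(sadj_val hi2) !(sadj_val hi) !(sadj_val hi2); move: (val x) => X.
crush_if.
Qed.

Lemma sadj_comm_pt i j x : (i.+1 < n)%N -> (j.+1 < n)%N -> ((i.+1 < j) || (j.+1 < i))%N ->
  sadj n i (sadj n j x) = sadj n j (sadj n i x).
Proof.
move=> hi hj hij; have := compS_sadj_comm hi hj hij => /permP /(_ x).
by rewrite !compSE.
Qed.

Lemma sadj_braid_pt i x : (i.+2 < n)%N ->
  sadj n i (sadj n i.+1 (sadj n i x)) = sadj n i.+1 (sadj n i (sadj n i.+1 x)).
Proof. by move=> hi2; have := compS_braid hi2 => /permP /(_ x); rewrite !compSE. Qed.

End Comb.

Section Matsumoto.
Variables (n : nat) (A : Type) (T : nat -> A -> A).
Hypothesis hcomm : forall i j v, (i.+1 < n)%N -> (j.+1 < n)%N -> ((i.+1 < j) || (j.+1 < i))%N ->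
  T i (T j v) = T j (T i v).
Hypothesis hbraid : forall i v, (i.+2 < n)%N -> T i (T i.+1 (T i v)) = T i.+1 (T i (T i.+1 v)).

Definition app (ws : seq nat) (v : A) : A := foldr (fun i u => T i u) v ws.

Lemma app_rcons u i v : app (rcons u i) v = app u (T i v).
Proof. by rewrite /app foldr_rcons. Qed.

Definition MP k := forall ws1 ws2, size ws1 = k -> reducedP n ws1 -> reducedP n ws2 ->
  word_perm n ws1 = word_perm n ws2 -> forall v, app ws1 v = app ws2 v.

Lemma red_size ws : reducedP n ws -> size ws = len (word_perm n ws).
Proof. by case/andP => _ /eqP. Qed.

Lemma red_mk ws w : valid_word n ws -> word_perm n ws = w -> size ws = len w -> reducedP n ws.
Proof. by move=> v p s; rewrite /reducedP v p s eqxx. Qed.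

Lemma mats_core k (IH : MP k) u i v j : (i < j)%N ->
  reducedP n (rcons u i) -> reducedP n (rcons v j) ->
  word_perm n (rcons u i) = word_perm n (rcons v j) -> size u = k ->
  forall x, app (rcons u i) x = app (rcons v j) x.
Proof.
move=> ij h1 h2 hp su.
have [ru hi au] := reduced_rcons h1; have [rv hj av] := reduced_rcons h2.
have s1 := red_size h1; have s2 := red_size h2.
move: hp s1 s2; rewrite !word_perm_rcons !size_rcons.
have hpu : word_perm n u = compS (compS (word_perm n u) (sadj n i)) (sadj n i).
  by rewrite -compSA compS_ss compS1r.
move: (compS (word_perm n u) (sadj n i)) hpu => w hpu hp.
have hpv : word_perm n v = compS w (sadj n j).
  by rewrite hp -compSA compS_ss compS1r.
rewrite -hp => s1 s2.
have svu : size v = k by lia.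
have vu := red_size ru; have vv := red_size rv.
rewrite hpu in au vu; rewrite hpv in av vv.
have ai : (fw w i.+1 < fw w i)%N by move: au; rewrite (fw_si _ hi) (fw_sj _ hi).
have aj : (fw w j.+1 < fw w j)%N by move: av; rewrite (fw_si _ hj) (fw_sj _ hj).
have vz : forall z l, valid_word n z -> (l.+1 < n)%N -> valid_word n (rcons z l).
  by move=> z l hz hl; rewrite valid_rcons hz hl.
case: (ltngtP i.+1 j) => [ij1||ej]; last 2 first.
- lia.
-
  subst j.
  have hi2 : (i.+2 < n)%N := hj.
  have d1 : (fw (compS w (sadj n i)) i.+2 < fw (compS w (sadj n i)) i.+1)%N.
    rewrite (fw_sj _ hi) (fw_so _ hi hi2) //; try lia.
  have d2 : (fw (compS (compS w (sadj n i)) (sadj n i.+1)) i.+1 <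
             fw (compS (compS w (sadj n i)) (sadj n i.+1)) i)%N.
    rewrite (fw_si _ hi2) (fw_so _ hi hi2) ?(fw_so _ hi2 (ltnW hi)) ?(fw_si _ hi) //; lia.
  have l2 := len_down hi2 d1; have l3 := len_down hi d2.
  have [z [vzz pz sz]] := exists_word (compS (compS (compS w (sadj n i)) (sadj n i.+1)) (sadj n i)).
  have eA : forall y, app u y = app (rcons (rcons z i) i.+1) y.
    apply: IH => //.
    apply: (red_mk (w := compS w (sadj n i))).
    + by apply vz => //; apply vz.
    + by rewrite !word_perm_rcons pz; apply/permP => y; rewrite !compSE !sadjK.
    + rewrite !size_rcons sz; lia.
    + by rewrite hpu !word_perm_rcons pz; apply/permP => y; rewrite !compSE !sadjK.
  have eB : forall y, app v y = app (rcons (rcons z i.+1) i) y.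
    apply: IH => //.
    apply: (red_mk (w := compS w (sadj n i.+1))).
    + by apply vz => //; apply vz.
    + rewrite !word_perm_rcons pz.
      apply/permP => y; rewrite !compSE; congr (w _).
      by rewrite (sadj_braid_pt _ hi2) sadjK sadjK.
    + rewrite !size_rcons sz; have := len_down hi2 aj; lia.
    + rewrite hpv !word_perm_rcons pz.
      apply/permP => y; rewrite !compSE; congr (w _).
      by rewrite (sadj_braid_pt _ hi2) sadjK sadjK.
  move=> x; rewrite !app_rcons eA eB !app_rcons hbraid //.
-
  have d1 : (fw (compS w (sadj n i)) j.+1 < fw (compS w (sadj n i)) j)%N.
    rewrite (fw_so _ hi hj) ?(fw_so _ hi (ltnW hj)) //; lia.
  have l2 := len_down hj d1.
  have [z [vzz pz sz]] := exists_word (compS (compS w (sadj n i)) (sadj n j)).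
  have eA : forall y, app u y = app (rcons z j) y.
    apply: IH => //.
    apply: (red_mk (w := compS w (sadj n i))).
    + by apply vz.
    + by rewrite !word_perm_rcons pz; apply/permP => y; rewrite !compSE !sadjK.
    + rewrite !size_rcons sz; lia.
    + by rewrite hpu !word_perm_rcons pz; apply/permP => y; rewrite !compSE !sadjK.
  have eB : forall y, app v y = app (rcons z i) y.
    apply: IH => //.
    apply: (red_mk (w := compS w (sadj n j))).
    + by apply vz.
    + rewrite !word_perm_rcons pz.
      apply/permP => y; rewrite !compSE; congr (w _).
      by rewrite (sadj_comm_pt _ hi hj) ?sadjK //; lia.
    + rewrite !size_rcons sz; have := len_down hj aj; lia.
    + rewrite hpv !word_perm_rcons pz.
      apply/permP => y; rewrite !compSE; congr (w _).
      by rewrite (sadj_comm_pt _ hi hj) ?sadjK //; lia.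
  move=> x; rewrite !app_rcons eA eB !app_rcons hcomm //; lia.
Qed.
Lemma matsumoto k : MP k.
Proof.
elim: k => [|k IH] ws1 ws2 s1 r1 r2 hp x.
  case: ws1 s1 r1 hp => // _ _ hp.
  have := red_size r2; rewrite -hp /= len1; by case: ws2 r2 {hp}.
case/lastP: ws1 s1 r1 hp => [//|u i]; rewrite size_rcons => -[su] r1 hp.
have s2 := red_size r2; rewrite -hp -(red_size r1) size_rcons su in s2.
case/lastP: ws2 s2 r2 hp => [//|v j] s2 r2 hp.
case: (ltngtP i j) => [ij|ji|eij].
- exact: (mats_core IH ij r1 r2 hp su).
- symmetry; apply: (mats_core IH ji r2 r1 (esym hp)).
  by move: s2; rewrite size_rcons => -[].
subst j.
have [ru hi _] := reduced_rcons r1; have [rv _ _] := reduced_rcons r2.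
rewrite !app_rcons; apply: (IH u v) => //.
move: hp; rewrite !word_perm_rcons => /permP h; apply/permP => y.
by have := h (sadj n i y); rewrite !compSE sadjK.
Qed.

End Matsumoto.

Section Hecke.
Variables (n : nat) (F : fieldType) (V : vectType F) (phi : {rmorphism Ah -> F}).
Variables (T x : nat -> {linear V -> V}).
Hypothesis hact : hecke_action n phi T x.
Local Open Scope ring_scope.
Local Notation p := (phi pA).
Local Notation q := (phi qA).

Lemma quad i v : (i.+1 < n)%N -> T i (T i v) = (q - p) *: T i v + (p * q) *: v.
Proof.
move=> hi; have H0 := (proj1 hact) i v hi.
rewrite linearB linearZ /= in H0.
rewrite -[T i (T i v)]subr0 -H0.
move: (T i v) => b; move: (T i b) => a.
rewrite scalerBr scalerA scalerBl opprD !opprB addrA [a + _]addrC subrK.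
by rewrite addrCA addrC.
Qed.



Lemma hcommT i j v : (i.+1 < n)%N -> (j.+1 < n)%N -> ((i.+1 < j) || (j.+1 < i))%N ->
  T i (T j v) = T j (T i v).
Proof. by move=> hi hj hij; apply: (proj1 (proj2 hact)). Qed.

Lemma hbraidT i v : (i.+2 < n)%N -> T i (T i.+1 (T i v)) = T i.+1 (T i (T i.+1 v)).
Proof. by move=> hi; apply: (proj1 (proj2 (proj2 hact))). Qed.

Definition TT := fun i (v : V) => T i v.

Lemma matsT ws1 ws2 : reducedP n ws1 -> reducedP n ws2 ->
  word_perm n ws1 = word_perm n ws2 -> forall v, app TT ws1 v = app TT ws2 v.
Proof. by move=> r1 r2 hp; apply: (@matsumoto n V TT hcommT hbraidT (size ws1)). Qed.

Variables (rw : 'S_n -> seq nat) (Yw0 : V) (Y : 'S_n -> V) (ev : {scalar V}).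
Hypothesis hrw : forall w : 'S_n, reduced_word_of (rw w) w.
Hypothesis hY : forall w : 'S_n, Y w = apply_word T (rw (compS w^-1 (w0 n))) Yw0.
Hypothesis hev1 : forall w : 'S_n, (ev (Y w) != 0) = (w == 1%g).

Lemma rw_red w : reducedP n (rw w).
Proof.
have [vw pw _] := hrw w; rewrite /reducedP vw pw (reduced_size (hrw w)) eqxx //.
Qed.

Lemma sadjV i : (sadj n i)^-1%g = sadj n i.
Proof. by apply/permP => y; apply: (@perm_inj _ (sadj n i)); rewrite permKV sadjK. Qed.

Definition Tb i (v : V) := T i v + (p - q) *: v.

Lemma Ystep b i : (i.+1 < n)%N ->
  Tb i (Y b) = if (fw b i < fw b i.+1)%N then (p * q) *: Y (compS b (sadj n i))
               else Y (compS b (sadj n i)) + (p - q) *: Y b.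
Proof.
move=> hi.
set c := compS b^-1 (w0 n).
have hc' : compS (compS b (sadj n i))^-1 (w0 n) = compS (sadj n i) c.
  by rewrite /c /compS invMg sadjV mulgA.
have Yb : Y b = app TT (rw c) Yw0 by rewrite hY.
have Yb' : Y (compS b (sadj n i)) = app TT (rw (compS (sadj n i) c)) Yw0 by rewrite hY hc'.
have lc : (len c + len b)%N = Npairs n by rewrite -(len_inv b) len_w0.
have lc' : (len (compS (sadj n i) c) + len (compS b (sadj n i)))%N = Npairs n.
  by rewrite -hc' -(len_inv (compS b (sadj n i))) len_w0.
have rc := rw_red c; have rc' := rw_red (compS (sadj n i) c).
have [vc pc _] := hrw c; have [vc' pc' _] := hrw (compS (sadj n i) c).
have sc := red_size rc; have sc' := red_size rc'.
rewrite pc in sc; rewrite pc' in sc'.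
case: ifP => hb.
- have l1 := len_up hi hb.
  have e : app TT (rw c) Yw0 = app TT (i :: rw (compS (sadj n i) c)) Yw0.
    apply: matsT => //.
    + rewrite /reducedP /= hi vc' /= pc' compSA compS_ss compS1 sc'.
      apply/eqP; lia.
    + by rewrite pc /= pc' compSA compS_ss compS1.
  rewrite /Tb Yb e /= -Yb' quad // /TT addrAC -scalerDl.
  by rewrite addrA subrK subrr scale0r add0r.
- have hb' : (fw b i.+1 < fw b i)%N.
    have hne : fw b i != fw b i.+1.
      by apply/eqP => /fw_inj h; have := h (ltnW hi) hi; lia.
    by case: ltngtP hb hne.
  have l1 := len_down hi hb'.
  have e : app TT (i :: rw c) Yw0 = app TT (rw (compS (sadj n i) c)) Yw0.
    apply: matsT => //.
    + rewrite /reducedP /= hi vc /= pc sc.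
      apply/eqP; lia.
    + by rewrite pc' /= pc.
  by rewrite /Tb Yb' -e /= -Yb.
Qed.

Lemma TbD i v w : Tb i (v + w) = Tb i v + Tb i w.
Proof. by rewrite /Tb linearD scalerDr addrACA. Qed.
Lemma TbZ i a v : Tb i (a *: v) = a *: Tb i v.
Proof. by rewrite /Tb linearZ /= scalerDr !scalerA mulrC. Qed.

Definition tbw ws v := foldr (fun i u => Tb i u) v ws.
Lemma tbwD ws v w : tbw ws (v + w) = tbw ws v + tbw ws w.
Proof. by elim: ws => //= i ws ->; rewrite TbD. Qed.
Lemma tbwZ ws a v : tbw ws (a *: v) = a *: tbw ws v.
Proof. by elim: ws => //= i ws ->; rewrite TbZ. Qed.
Lemma tbw_rcons u i v : tbw (rcons u i) v = tbw u (Tb i v).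
Proof. by rewrite /tbw foldr_rcons. Qed.

Lemma compS_eq_s a b i : (compS a (sadj n i) == b) = (a == compS b (sadj n i)).
Proof.
apply/eqP/eqP => [<-|->]; apply/permP => y; by rewrite !compSE sadjK.
Qed.

Lemma evT ws : reducedP n ws -> forall b,
  ev (tbw ws (Y b)) = if word_perm n ws == b then ev (Y 1%g) else 0.
Proof.
elim/last_ind: ws => [_ b|u i IH hr b].
  rewrite /= ; case: eqP => [<-//|/eqP hb].
  by apply/eqP; rewrite -[_ == 0]negbK hev1 eq_sym (negPf hb).
have [ru hi au] := reduced_rcons hr.
rewrite tbw_rcons word_perm_rcons compS_eq_s (Ystep _ hi).
case: ifP => hb.
- rewrite tbwZ linearZ /= IH //.
  have -> : (word_perm n u == compS b (sadj n i)) = false.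
    apply/negP => /eqP e; move: au; rewrite e (fw_si _ hi) (fw_sj _ hi); lia.
  by rewrite mulr0.
- rewrite tbwD tbwZ linearD linearZ /= !IH //.
  have -> : (word_perm n u == b) = false by apply/negP => /eqP e; rewrite e hb in au.
  by rewrite mulr0 addr0.
Qed.

End Hecke.



Local Open Scope ring_scope.

Section Sep.
Variables (n : nat) (F : fieldType) (V : vectType F) (Y : 'S_n -> V).
Hypothesis hbasis : basis_of fullv [seq Y w | w <- enum 'S_n].

Lemma dec_basis v : v = \sum_(k < size [seq Y w | w <- enum 'S_n])
   coord (in_tuple [seq Y w | w <- enum 'S_n]) k v *: Y (nth 1%g (enum 'S_n) k).
Proof.
rewrite {1}(coord_basis (X := in_tuple [seq Y w | w <- enum {perm (ordinal n)}]) hbasis (memvf v)).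
apply: eq_bigr => k _; congr (_ *: _).
by apply: (nth_map 1%g 0 Y); rewrite -(size_map Y).
Qed.

Lemma sep_lemma (Lam : 'S_n -> V -> F) (e : F) :
  e != 0 -> (forall w u v, Lam w (u + v) = Lam w u + Lam w v) ->
  (forall w a u, Lam w (a *: u) = a * Lam w u) ->
  (forall w b, Lam w (Y b) = if w == b then e else 0) ->
  forall D, (forall w, Lam w D = 0) -> D = 0.
Proof.
move=> he hD hZ hY D hLD.
have L0 : forall w, Lam w 0 = 0 by move=> w; rewrite -(scale0r 0) hZ mul0r.
have Ls : forall w (I : finType) (G : I -> V), Lam w (\sum_i G i) = \sum_i Lam w (G i).
  by move=> w I G; apply: (big_morph (Lam w) (hD w) (L0 w)).
rewrite (dec_basis D) big1 // => k _.
have hk : (k < size (enum 'S_n))%N by rewrite -(size_map Y) ltn_ord.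
have := hLD (nth 1%g (enum 'S_n) k); rewrite {1}(dec_basis D) Ls.
rewrite (bigD1 k) //= big1 ?addr0 => [|j hj]; last first.
  have hj' : (j < size (enum 'S_n))%N by rewrite -(size_map Y) ltn_ord.
  rewrite hZ hY nth_uniq ?enum_uniq //.
  rewrite ifN ?mulr0 //; apply: contra hj => /eqP h; apply/eqP; exact: val_inj.
rewrite hZ hY eqxx => /eqP; rewrite mulf_eq0 (negPf he) orbF => /eqP ->.
by rewrite scale0r.
Qed.

End Sep.



Section Ring.
Variables (F : fieldType) (V : vectType F) (hV : (0 < dim V)%N).
Definition RR : nzRingType := lfun_comp_nzRingType hV.
Variable (phi : {rmorphism Ah -> F}).

Lemma RR_mulE (f g : RR) (v : V) : (f * g : RR) v = f (g v).
Proof. by rewrite /= comp_lfunE. Qed.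
Lemma RR_oneE (v : V) : (1 : RR) v = v.
Proof. by rewrite /= id_lfunE. Qed.

Definition cmap (a : Ah) : RR := phi a *: (\1%VF : 'End(V)).

Lemma cmap_is_additive : additive cmap.
Proof. by move=> a b; rewrite /cmap rmorphB scalerBl. Qed.

Lemma cmap_is_multiplicative : multiplicative cmap.
Proof.
split.
  move=> a b; apply/lfunP => v; rewrite RR_mulE /cmap !scale_lfunE !id_lfunE.
  by rewrite rmorphM scalerA.
by apply/lfunP => v; rewrite /cmap rmorph1 scale1r.
Qed.

HB.instance Definition _ := GRing.isAdditive.Build Ah RR cmap cmap_is_additive.
HB.instance Definition _ := GRing.isMultiplicative.Build Ah RR cmap cmap_is_multiplicative.

Lemma cmapE a v : cmap a v = phi a *: v.
Proof. by rewrite /cmap scale_lfunE id_lfunE. Qed.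


Lemma RR_addE (f g : RR) v : (f + g : RR) v = f v + g v.
Proof. exact: add_lfunE. Qed.
Lemma RR_subE (f g : RR) v : (f - g : RR) v = f v - g v.
Proof. by rewrite RR_addE opp_lfunE. Qed.
Lemma RR_zeroE v : (0 : RR) v = 0.
Proof. exact: zero_lfunE. Qed.
Lemma cdiffE a b u : (cmap a - cmap b : RR) u = (phi a - phi b) *: u.
Proof. by rewrite RR_subE !cmapE scalerBl. Qed.

Lemma RR_prodE (I : Type) (s : seq I) (G : I -> RR) v :
  (\prod_(i <- s) G i : RR) v = foldr (fun i u => G i u) v s.
Proof.
elim: s => [|i s IH]; first by rewrite big_nil RR_oneE.
by rewrite big_cons RR_mulE IH.
Qed.

Lemma RR_expE (X : RR) k v : (X ^+ k : RR) v = iter k X v.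
Proof. by elim: k => [|k IH]; rewrite ?expr0 ?RR_oneE // exprS RR_mulE IH. Qed.

Lemma index_enum_ord (n : nat) : index_enum 'I_n = enum 'I_n.
Proof. by rewrite [index_enum _]unlock -enumT. Qed.

Lemma peval_act (n : nat) (x : nat -> {linear V -> V}) (G : {mpoly Ah[n]}) v :
  (peval cmap (fun i => (linfun (x i) : RR)) G) v = poly_act phi x G v.
Proof.
rewrite /peval sum_lfunE /poly_act; apply: eq_bigr => m _.
rewrite RR_mulE cmapE; congr (_ *: _).
rewrite RR_prodE /xmon_act index_enum_ord.
elim: (enum 'I_n) => [//|i s IH] /=.
rewrite RR_expE IH; move: (foldr _ v s) => u.
by elim: (m i) => [//|k IHk] /=; rewrite lfunE /= IHk.
Qed.

Lemma Tbar_act (T : nat -> {linear V -> V}) ws v :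
  (Tbar_word cmap (fun i => (linfun (T i) : RR)) ws) v =
  foldr (fun i u => T i u + (phi pA - phi qA) *: u) v ws.
Proof.
elim: ws => [|i ws IH]; first by rewrite /Tbar_word big_nil RR_oneE.
rewrite /Tbar_word big_cons RR_mulE -/(Tbar_word _ _ _) IH.
rewrite RR_addE lfunE /= RR_addE opp_lfunE !cmapE.
by rewrite scalerBl.
Qed.

Lemma ev_poly (n : nat) (x : nat -> {linear V -> V}) (ev : {scalar V}) (t : nat -> F) :
  (forall i v, (i < n)%N -> ev (x i v) = t i * ev v) ->
  forall (G : {mpoly Ah[n]}) v, ev (poly_act phi x G v) = (map_mpoly phi G).@[fun i : 'I_n => t i] * ev v.
Proof.
move=> hx G v.
have eM : (map_mpoly phi G).@[fun i : 'I_n => t i] =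
    \sum_(m <- msupp G) phi G@_m * \prod_(i < n) t i ^+ m i.
  rewrite [in LHS](mpolyE G) [map_mpoly _ _]raddf_sum raddf_sum.
  apply: eq_bigr => m _.
  by rewrite /= map_mpolyZ map_mpolyX mevalZ mevalX.
rewrite /poly_act linear_sum eM mulr_suml.
apply: eq_bigr => m _; rewrite linearZ /= -mulrA.
congr (_ * _); rewrite /xmon_act index_enum_ord.
elim: (enum 'I_n) => [|i s IH] /=; first by rewrite big_nil mul1r.
rewrite big_cons -mulrA -IH; move: (foldr _ v s) => u.
elim: (m i) => [|k IHk] /=; first by rewrite expr0 mul1r.
by rewrite hx // IHk exprS mulrA.
Qed.

End Ring.


Unset Implicit Arguments.
Set Strict Implicit.

Theorem theorem3p6
  (n : nat) (rw : 'S_n -> seq nat)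
  (hrw : forall w : 'S_n, reduced_word_of (rw w) w)
  (F : fieldType) (phi : {rmorphism Ah -> F}) (t : nat -> F)
  (V : vectType F) (T x : nat -> {linear V -> V})
  (hact : hecke_action n phi T x)
  (Yw0 : V)
  (Y : 'S_n -> V)
  (hY : forall w : 'S_n, Y w = apply_word T (rw (compS w^-1 (w0 n))) Yw0)
  (hbasis : basis_of fullv [seq Y w | w <- enum 'S_n])
  (ev : {scalar V})
  (hev1 : forall w : 'S_n, (ev (Y w) != 0) = (w == 1%g))
  (hevx : forall (i : nat) (w : 'S_n), (i < n)%N -> ev (x i (Y w)) = t i * ev (Y w))
  (f : {mpoly Ah[n]}) (P : 'S_n -> 'S_n -> {mpoly Ah[n]})
  (hP : forall w : 'S_n, hecke_identity rw f P w) :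
  forall u : 'S_n,
    poly_act phi x f (Y u) =
      \sum_(w : 'S_n) (map_mpoly phi (P u w)).@[fun i : 'I_n => t i] *: Y w.
Proof.
move=> u.
set e := ev (Y 1%g).
have he : e != 0 by rewrite /e hev1.
have hx : forall i v, (i < n)%N -> ev (x i v) = t i * ev v.
  move=> i v hi; rewrite (dec_basis hbasis v) !linear_sum mulr_sumr.
  by apply: eq_bigr => k _; rewrite !linearZ /= hevx // mulrCA.
have hV : (0 < dim V)%N.
  rewrite -dimvf (@vector.size_basis _ _ fullv _ (in_tuple [seq Y w | w <- enum {perm 'I_n}]) hbasis).
  by rewrite size_map -cardE; apply/card_gt0P; exists 1%g.
have hc : forall (a : Ah) (r : RR hV), cmap hV phi a * r = r * cmap hV phi a.
  by move=> a r; apply/lfunP => w; rewrite !RR_mulE !(cmapE hV phi) linearZ.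
have hrel : hecke_rel n (cmap hV phi) (fun i => (linfun (T i) : RR hV)) (fun i => (linfun (x i) : RR hV)).
  case: hact => [hq [hcm [hbr [hxx [htx [h1 h2]]]]]].
  split.
    move=> i hi; apply/lfunP => v; rewrite RR_mulE RR_zeroE RR_addE !RR_subE !lfunE /=.
    by rewrite !id_lfunE; apply: hq.
  split.
    by move=> i j hi hj hij; apply/lfunP => v; rewrite !RR_mulE !lfunE /= hcm.
  split.
    by move=> i hi; apply/lfunP => v; rewrite !RR_mulE !lfunE /= hbr.
  split.
    by move=> i j hi hj; apply/lfunP => v; rewrite !RR_mulE !lfunE /= hxx.
  split.
    by move=> i j hi hj h3 h4; apply/lfunP => v; rewrite !RR_mulE !lfunE /= htx.
  split.
    move=> i hi; apply/lfunP => v; rewrite RR_mulE RR_addE RR_mulE RR_subE RR_mulE.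
    by rewrite (cdiffE hV phi) (cmapE hV phi) !lfunE /= h1.
  move=> i hi; apply/lfunP => v; rewrite RR_mulE RR_subE RR_mulE RR_subE RR_mulE.
  by rewrite (cdiffE hV phi) (cmapE hV phi) !lfunE /= h2.
pose Lam := fun (w : 'S_n) (v : V) => ev (tbw phi T (rw w) v).
have LD : forall w a b, Lam w (a + b) = Lam w a + Lam w b.
  by move=> w a b; rewrite /Lam tbwD linearD.
have LZ : forall w k a, Lam w (k *: a) = k * Lam w a.
  by move=> w k a; rewrite /Lam tbwZ linearZ.
have LY : forall w b, Lam w (Y b) = if w == b then e else 0.
  move=> w b; rewrite /Lam (evT hact hrw hY hev1 (rw_red hrw w)).
  by have [_ -> _] := hrw w.
have L0 : forall w, Lam w 0 = 0 by move=> w; rewrite -(scale0r 0) LZ mul0r.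
have Ls : forall w (G : 'S_n -> V), Lam w (\sum_i G i) = \sum_i Lam w (G i).
  by move=> w G; apply: (big_morph (Lam w) (LD w) (L0 w)).
have H1 : forall w, Lam w (poly_act phi x f (Y u)) =
    (map_mpoly phi (P u w)).@[fun i : 'I_n => t i] * e.
  move=> w; have := hP w (RR hV) (cmap hV phi) (fun i => (linfun (T i) : RR hV)) (fun i => (linfun (x i) : RR hV)) hc hrel => /lfunP /(_ (Y u)).
  rewrite RR_mulE Tbar_act peval_act sum_lfunE => E.
  rewrite /Lam; have -> : tbw phi T (rw w) (poly_act phi x f (Y u)) =
     foldr (fun i u0 => T i u0 + (phi pA - phi qA) *: u0) (poly_act phi x f (Y u)) (rw w) by [].
  rewrite E linear_sum (bigD1 u) //= big1 ?addr0 => [|u' hu'].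
    rewrite RR_mulE peval_act Tbar_act (ev_poly phi hx).
    have := LY u u; rewrite /Lam eqxx => <-; by [].
  rewrite RR_mulE peval_act Tbar_act (ev_poly phi hx).
  have := LY u' u; rewrite /Lam (negPf hu') => ->; by rewrite mulr0.
have H2 : forall w, Lam w (\sum_(w' : 'S_n) (map_mpoly phi (P u w')).@[fun i : 'I_n => t i] *: Y w') =
    (map_mpoly phi (P u w)).@[fun i : 'I_n => t i] * e.
  move=> w; rewrite Ls (bigD1 w) //= big1 ?addr0 => [|w' hw'].
    by rewrite LZ LY eqxx.
  by rewrite LZ LY eq_sym (negPf hw') mulr0.
apply/eqP; rewrite -subr_eq0; apply/eqP.
apply: (sep_lemma hbasis he (Lam := Lam)) => // w.
by rewrite -[_ - _]addr0 -[X in _ + X](scale0r 0) -scaleN1r LD LD LZ LZ H1 H2 L0 mulr0 addr0 mulN1r subrr.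
Qed.
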